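(* Let $X$ be a distance regular graph of diameter $d$, let $A_i$ be the adjacency matrix of its $i$-th distance graph ($i=0,\dots,d$), let $Y=\mathrm{LD}(X)$, and let $Y_i$ be the $i$-th distance digraph of $Y$. Then $A(Y_0)=I$, $A(Y_2)=D_h^TA_1D_t - I$, and $A(Y_i)=D_h^TA_{i-1}D_t$ for $i\in\{1,3,4,\dots,d+1\}$.
   Context: $X$ is a connected $k$-regular distance regular graph (for vertices $u,v$ at distance $\ell$, the number of vertices at distance $i$ from $u$ and $j$ from $v$ depends only on $i,j,\ell$). $A_i$ is the $01$-matrix with $(A_i)_{uv}=1$ iff $\mathrm{dist}_X(u,v)=i$. Each edge $\{a,b\}$ of $X$ is replaced by arcs $(a,b)$ and $(b,a)$; the line digraph $\mathrm{LD}(X)$ has the arcs as vertices, with an arc from $(a,b)$ to $(c,d)$ iff $b=c$. For a digraph $Y$, its $i$-th distance digraph $Y_i$ has the same vertex set, with $a$ adjacent to $b$ iff the directed distance from $a$ to $b$ in $Y$ is $i$; $A(\cdot)$ denotes the $01$-adjacency matrix. $D_t$ and $D_h$ have rows indexed by vertices of $X$ and columns by arcs: $(D_t)_{u,(a,b)}=1$ iff $u=a$, $(D_h)_{u,(a,b)}=1$ iff $u=b$, and $0$ otherwise. *)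

(* Defs.v *)
From HB Require Import structures.
From mathcomp Require Import all_boot all_order all_algebra.
Set Implicit Arguments. Unset Strict Implicit. Unset Printing Implicit Defensive.
Import GRing.Theory.
Local Open Scope ring_scope.

Fixpoint walkb (T : finType) (e : rel T) (n : nat) (u v : T) : bool :=
  if n is n'.+1 then [exists w, e u w && walkb e n' w v] else u == v.

Definition is_dist (T : finType) (e : rel T) (i : nat) (u v : T) : bool :=
  walkb e i u v && [forall j : 'I_i, ~~ walkb e j u v].

Definition distrel (T : finType) (e : rel T) (i : nat) : rel T :=
  fun u v => is_dist e i u v.

Definition simple_graph (V : finType) (adj : rel V) : Prop :=
  symmetric adj /\ irreflexive adj.

Definition connected_graph (V : finType) (adj : rel V) : Prop :=
  forall u v : V, connect adj u v.

Definition regular_graph (V : finType) (adj : rel V) (k : nat) : Prop :=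
  forall u : V, #|[set w | adj u w]| = k.

Definition distance_regular (V : finType) (adj : rel V) : Prop :=
  forall (i j l : nat) (u v u' v' : V),
    is_dist adj l u v -> is_dist adj l u' v' ->
    #|[set w | is_dist adj i u w && is_dist adj j v w]| =
    #|[set w | is_dist adj i u' w && is_dist adj j v' w]|.

Definition has_diameter (V : finType) (adj : rel V) (d : nat) : Prop :=
  (forall u v : V, exists2 i, (i <= d)%N & is_dist adj i u v) /\
  (exists u v : V, is_dist adj d u v).

(* Arcs: each edge {a,b} gives the arcs (a,b) and (b,a). *)
Definition arc (V : finType) (adj : rel V) : finType :=
  {p : V * V | adj p.1 p.2}.

Definition arc_tail (V : finType) (adj : rel V) (x : arc adj) : V := (val x).1.
Definition arc_head (V : finType) (adj : rel V) (x : arc adj) : V := (val x).2.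

Definition line_digraph (V : finType) (adj : rel V) : rel (arc adj) :=
  fun x y => arc_head x == arc_tail y.

Definition mxof (T T' : finType) (f : T -> T' -> bool) : 'M[int]_(#|T|, #|T'|) :=
  \matrix_(i, j) (f (enum_val i) (enum_val j))%:R.

Definition adjmx (T : finType) (e : rel T) : 'M[int]_(#|T|, #|T|) := mxof e.

Definition Dt (V : finType) (adj : rel V) : 'M[int]_(#|V|, #|arc adj|) :=
  mxof (fun (u : V) (x : arc adj) => u == arc_tail x).
Definition Dh (V : finType) (adj : rel V) : 'M[int]_(#|V|, #|arc adj|) :=
  mxof (fun (u : V) (x : arc adj) => u == arc_head x).

Arguments line_digraph {V} adj.
Arguments Dt {V} adj.
Arguments Dh {V} adj.
Arguments arc_tail {V adj}.
Arguments arc_head {V adj}.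
Arguments distrel {T} e i.

(* Main.v *)
Require Import Defs.
From HB Require Import structures.
From mathcomp Require Import all_boot all_order all_algebra.
Import GRing.Theory.
Local Open Scope ring_scope.

Lemma walk_LD (V : finType) (adj : rel V) (n : nat) (x y : Defs.arc adj) :
  walkb (line_digraph adj) n.+1 x y = walkb adj n (arc_head x) (arc_tail y).
Proof.
have wS : forall (T : finType) (e : rel T) m u v,
  walkb e m.+1 u v = [exists w, e u w && walkb e m w v] by [].
elim: n x => [|n IH] x.
  rewrite wS /=.
  apply/existsP/idP => [[w /andP [h /eqP <-]] //|h]; by exists y; rewrite eqxx andbT.
rewrite wS [RHS]wS.
apply/existsP/existsP => [[w /andP [h1 h2]]|[v /andP [h1 h2]]].
  rewrite IH in h2; exists (arc_head w); rewrite h2 andbT.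
  rewrite (eqP h1); exact: (valP w).
exists (Sub (arc_head x, v) h1 : Defs.arc adj); rewrite IH /line_digraph /=.
by rewrite /arc_tail /arc_head SubK /= eqxx.
Qed.

Lemma isdist_LD0 (V : finType) (adj : rel V) (x y : Defs.arc adj) :
  is_dist (line_digraph adj) 0 x y = (x == y).
Proof.
rewrite /is_dist /=; case: (x == y) => //=.
by apply/forallP => -[].
Qed.

Lemma isdist_LDS (V : finType) (adj : rel V) (i : nat) (x y : Defs.arc adj) :
  is_dist (line_digraph adj) i.+1 x y =
  (x != y) && is_dist adj i (arc_head x) (arc_tail y).
Proof.
rewrite /is_dist walk_LD.
apply/andP/andP => [[h1 /forallP h2]|[h0 /andP [h1 /forallP h2]]].
  split; first by have := h2 ord0.
  rewrite h1; apply/forallP => j.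
  by move: (h2 (lift ord0 j)); rewrite lift0 walk_LD.
split=> //; apply/forallP => j.
case: j => -[|j] Hj //=.
by rewrite -[X in ~~ X]/(walkb (line_digraph adj) j.+1 x y) walk_LD; exact: (h2 (Ordinal (Hj : (j < i)%N))).
Qed.

Lemma sum_sel (T : finType) (t : T) (F : 'I_#|T| -> int) :
  \sum_u ((enum_val u == t)%:R * F u) = F (@enum_rank T t).
Proof.
rewrite (bigD1 (@enum_rank T t)) //= enum_rankK eqxx mul1r big1 ?addr0 // => u ne.
rewrite (_ : (enum_val u == t) = false) ?mul0r //; apply/negbTE.
by apply: contra ne => /eqP <-; rewrite enum_valK.
Qed.

Lemma sum_sel' (T : finType) (t : T) (F : 'I_#|T| -> int) :
  \sum_u (F u * (enum_val u == t)%:R) = F (@enum_rank T t).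
Proof.
rewrite -(sum_sel _ t); apply: eq_bigr => u _; by rewrite mulrC.
Qed.

Lemma prod_entry (V : finType) (adj : rel V) (m : nat) r s :
  ((Dh adj)^T *m adjmx (@distrel V adj m) *m Dt adj) r s =
  (is_dist adj m (arc_head (enum_val r)) (arc_tail (enum_val s)))%:R.
Proof.
rewrite /Dt /Dh /adjmx /mxof mxE.
under eq_bigr => v _ do rewrite [X in _ * X]mxE.
rewrite sum_sel' mxE.
under eq_bigr => u _ do rewrite !mxE.
by rewrite sum_sel !enum_rankK.
Qed.

Lemma dist_uniq {T : finType} {e : rel T} {m n u v} :
  is_dist e m u v -> is_dist e n u v -> m = n.
Proof.
wlog: m n / (m <= n)%N => [W H1 H2|].
  case: (leqP m n) => h; first exact: W.
  by apply/esym/W => //; apply: ltnW.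
rewrite leq_eqVlt => /orP [/eqP //|lt] /andP [w1 _] /andP [_ /forallP f].
by have := f (Ordinal lt); rewrite w1.
Qed.

Theorem lemma4p2 (V : finType) (adj : rel V) (k d : nat) :
  simple_graph adj -> connected_graph adj -> regular_graph adj k ->
  distance_regular adj -> has_diameter adj d ->
  [/\ adjmx (distrel (line_digraph adj) 0) = 1%:M,
      adjmx (distrel (line_digraph adj) 2) =
        (Dh adj)^T *m adjmx (@distrel V adj 1) *m Dt adj - 1%:M
    & forall i : nat, (1 <= i <= d.+1)%N -> i != 2%N ->
      adjmx (distrel (line_digraph adj) i) =
        (Dh adj)^T *m adjmx (@distrel V adj i.-1) *m Dt adj].
Proof.
move=> [sym irr] _ _ _ _.
have arc1 : forall x : Defs.arc adj, is_dist adj 1 (arc_head x) (arc_tail x).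
  move=> x; rewrite /is_dist /=; apply/andP; split.
    apply/existsP; exists (arc_tail x); rewrite eqxx andbT sym; exact: (valP x).
  apply/forallP => -[[|j] //= _]; apply/negP => /eqP E.
  by have := valP x; rewrite /arc_head /arc_tail in E; rewrite E irr.
have neq : forall r s : 'I_#|Defs.arc adj|, (enum_val r != enum_val s) = (r != s).
  move=> r s; apply/idP/idP; apply: contra => /eqP E.
    by rewrite E.
  by rewrite -(enum_valK r) E enum_valK.
split.
- apply/matrixP => r s; rewrite !mxE /distrel isdist_LD0.
  by rewrite -!(inj_eq enum_val_inj).
- apply/matrixP => r s; rewrite [RHS]mxE prod_entry /adjmx /mxof !mxE /distrel isdist_LDS neq.
  case: eqP => [->|_] /=; last by rewrite subr0.
  by rewrite arc1 subrr.
- move=> [|i] // _ H; apply/matrixP => r s.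
  rewrite prod_entry /adjmx /mxof !mxE /distrel isdist_LDS /= neq.
  case: eqP => [->|//] /=.
  case E: (is_dist _ _ _ _) => //.
  by have := dist_uniq E (arc1 (enum_val s)) => Ei; rewrite Ei in H.
Qed.
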